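(* Let $\mathcal{K}=\{1,\ldots,K\}$ be a set of users, and for each $k\in\mathcal{K}$ let $\gamma_k:\mathbb{R}_{>0}^K\to\mathbb{R}_{>0}$ be the uplink SINDR of user $k$ as a function of the transmit power vector $\boldsymbol{\rho}=[\rho_1,\ldots,\rho_K]^{\mathrm{T}}$, for fixed receivers. Suppose there exist power vectors $\boldsymbol{\rho}\succeq\boldsymbol{\rho}'$ (componentwise $\ge$, with $\boldsymbol{\rho}'$ having positive entries) such that $\gamma_k(\boldsymbol{\rho})<\gamma_k(\boldsymbol{\rho}')$ for all $k\in\mathcal{K}$. Then the transmit powers are in the quantization-distortion-dominated region of the non-monotonic SINDR, i.e., the SINDR functions cannot be of the unquantized form $\gamma_k(\boldsymbol{\rho})=G_k(\rho_k)/I_k(\boldsymbol{\rho})$ with $G_k(\rho_k)=g_k\rho_k$ ($g_k>0$) and $I_k$ a standard interference function; equivalently, for any such unquantized-form SINR functions and any $\boldsymbol{\rho}\succeq\boldsymbol{\rho}'$ there is at least one $k$ with $\gamma_k(\boldsymbol{\rho})\ge\gamma_k(\boldsymbol{\rho}')$.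
   Context: A standard interference function $I:\mathbb{R}_{\ge 0}^K\to\mathbb{R}_{>0}$ (Yates) satisfies positivity $I(\boldsymbol{\rho})>0$, monotonicity ($\boldsymbol{\rho}\succeq\boldsymbol{\rho}'\Rightarrow I(\boldsymbol{\rho})\ge I(\boldsymbol{\rho}')$) and scalability ($a>1\Rightarrow aI(\boldsymbol{\rho})>I(a\boldsymbol{\rho})$). In an unquantized system with fixed receivers, the SINR of user $k$ has the form (signal power linear in $\rho_k$)/(interference-plus-noise given by a standard interference function). The SINDR of user $k$ is called non-monotonic due to quantization distortion (QD), produced by 1-bit ADCs at the receivers, if for fixed interference and noise there is $\rho_k>\rho_k'$ with $\gamma_k(\rho_k)<\gamma_k(\rho_k')$; the ''QD-dominated region'' refers to transmit powers where the SINDR exhibits such non-monotonic behavior, which cannot occur for unquantized-form SINRs. *)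

(* Defs.v *)
From mathcomp Require Import all_boot all_order all_algebra.
Set Implicit Arguments. Unset Strict Implicit. Unset Printing Implicit Defensive.
Import Order.TTheory GRing.Theory Num.Theory.
Local Open Scope ring_scope.

Definition nonneg_vec (R : realFieldType) (K : nat) (x : 'I_K -> R) : Prop :=
  forall k, 0 <= x k.

Definition standard_interference (R : realFieldType) (K : nat)
    (I : ('I_K -> R) -> R) : Prop :=
  (forall rho, nonneg_vec rho -> 0 < I rho) /\
  (forall rho rho', nonneg_vec rho -> nonneg_vec rho' ->
     (forall k, rho' k <= rho k) -> I rho' <= I rho) /\
  (forall (a : R) rho, nonneg_vec rho -> 1 < a ->
     I (fun k => a * rho k) < a * I rho).

Definition sinr_unq (R : realFieldType) (K : nat) (g : 'I_K -> R)
    (I : 'I_K -> ('I_K -> R) -> R) (k : 'I_K) (rho : 'I_K -> R) : R :=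
  g k * rho k / I k rho.

(* Main.v *)
Require Import Defs.
From mathcomp Require Import all_boot all_order all_algebra.
From mathcomp Require Import ring lra.
Import Order.TTheory GRing.Theory Num.Theory.
Local Open Scope ring_scope.

Theorem theorem1 (R : realFieldType) (K : nat) (g : 'I_K -> R)
    (I : 'I_K -> ('I_K -> R) -> R) :
  (0 < K)%N ->
  (forall k, 0 < g k) ->
  (forall k, standard_interference (I k)) ->
  forall rho rho' : 'I_K -> R,
    (forall k, 0 < rho' k) ->
    (forall k, rho' k <= rho k) ->
    exists k, sinr_unq g I k rho' <= sinr_unq g I k rho.
Proof.
move=> K0 gp HI rho rho' rp rle.
have i0 : 'I_K := Ordinal K0.
pose f := fun i => rho i / rho' i.
have [k kmax] : exists k, forall j, f j <= f k.
  case: (@arg_maxP _ R _ i0 xpredT f erefl) => k _ H.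
  by exists k => j; apply: H.
exists k.
set a := f k.
have nn' : nonneg_vec rho' by move=> j; apply: ltW.
have nn : nonneg_vec rho by move=> j; apply: (le_trans (ltW (rp j))).
have rhok : rho k = a * rho' k by rewrite /a /f mulrAC -mulrA divff ?mulr1 // gt_eqF.
have rhoj : forall j, rho j <= a * rho' j.
  by move=> j; rewrite -ler_pdivrMr //; apply: kmax.
have a1 : 1 <= a.
  have := rle k; rewrite rhok => h.
  have := rp k; nra.
have [P [M S]] := HI k.
have A0 := P _ nn'. have B0 := P _ nn.
have BA : I k rho <= a * I k rho'.
  move: a1; rewrite le_eqVlt => /orP [/eqP a1e | a1l].
    rewrite -a1e mul1r; apply: M => // j; have := rhoj j; by rewrite -a1e mul1r.
  apply: le_trans (ltW (S _ _ nn' a1l)); apply: M => //.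
  by move=> j; apply: mulr_ge0; [lra | apply: nn'].
rewrite /sinr_unq ler_pdivrMr // mulrAC ler_pdivlMr // rhok.
have gr : 0 <= g k * rho' k by apply: mulr_ge0; apply: ltW.
have := ler_wpM2l gr BA.
by have -> : g k * rho' k * (a * I k rho') = g k * (a * rho' k) * I k rho' by ring.
Qed.
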